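(* Let $q=p^m$ with $p$ prime, $3\le k\le n\le q$, $\alpha=(\alpha_1,\dots,\alpha_n)\in\mathbb{F}_q^n$ with pairwise distinct entries, $v\in(\mathbb{F}_q^* )^n$, $\eta\in\mathbb{F}_q^*$, $\delta\in\mathbb{F}_q$, and let $\mathcal{C}$ be the code of length $n+3$ defined in the context. If $3\le k\le n-4$, then $\mathcal{C}$ is of non-GRS type, i.e. it is not monomially equivalent to any generalized Reed–Solomon code.
   Context: Let $\mathcal{S}=\{f(x)=\sum_{i=0}^{k-1}f_ix^i+\eta f_{k-1}x^{k+2}:f_i\in\mathbb{F}_q\}$ and $\mathcal{C}=\{(v_1f(\alpha_1),\dots,v_nf(\alpha_n),f_{k-1},f_{k-2},f_{k-3}+\delta f_{k-1}):f\in\mathcal{S}\}\subseteq\mathbb{F}_q^{n+3}$, where $f_j$ is the coefficient of $x^j$ ($j\le k-1$). A generalized Reed–Solomon (GRS) code of length $N$ and dimension $k$ is $\{(w_1g(\beta_1),\dots,w_Ng(\beta_N)):g\in\mathbb{F}_q[x],\deg g<k\}$ for pairwise distinct $\beta_i\in\mathbb{F}_q$ and $w_i\in\mathbb{F}_q^*$. Two codes of the same length are monomially equivalent if $GM$ generates the second code for some generator matrix $G$ of the first and some monomial matrix $M$. *)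

(* Defs.v *)
From HB Require Import structures.
From mathcomp Require Import all_boot all_order all_algebra.
Set Implicit Arguments. Unset Strict Implicit. Unset Printing Implicit Defensive.
Import GRing.Theory.
Local Open Scope ring_scope.

Definition code (F : fieldType) (N : nat) := 'rV[F]_N -> Prop.

Definition generates (F : fieldType) (r N : nat) (G : 'M[F]_(r, N)) (C : code F N) :=
  row_free G /\ forall x : 'rV[F]_N, C x <-> exists u : 'rV[F]_r, x = u *m G.

Definition monomial_mx (F : fieldType) (N : nat) (M : 'M[F]_N) :=
  (forall i : 'I_N, #|[set j : 'I_N | M i j != 0]| = 1%N) /\
  (forall j : 'I_N, #|[set i : 'I_N | M i j != 0]| = 1%N).

Definition monomially_equivalent (F : fieldType) (N : nat) (C1 C2 : code F N) :=
  exists (r : nat) (G : 'M[F]_(r, N)) (M : 'M[F]_N),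
    generates G C1 /\ monomial_mx M /\ generates (G *m M) C2.

Definition GRS_code (F : fieldType) (N k : nat) (beta w : 'I_N -> F) : code F N :=
  fun x => exists g : {poly F}, (size g <= k)%N /\
    x = \row_(i < N) (w i * g.[beta i]).

Definition is_GRS (F : fieldType) (N : nat) (C : code F N) :=
  exists (k : nat) (beta w : 'I_N -> F),
    injective beta /\ (forall i, w i != 0) /\
    (forall x, C x <-> GRS_code k beta w x).

Definition twisted_code (F : fieldType) (n k : nat) (alpha v : 'I_n -> F)
    (eta delta : F) : code F (n + 3) :=
  fun x => exists g : {poly F}, (size g <= k)%N /\
    let f := g + (eta * g`_(k.-1)) *: 'X^(k + 2) in
    x = \row_(j < n + 3)
          match split j with
          | inl i => v i * f.[alpha i]
          | inr t => if val t == 0%N then g`_(k.-1)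
                     else if val t == 1%N then g`_(k - 2)
                     else g`_(k - 3) + delta * g`_(k.-1)
          end.

(* Main.v *)
Require Import Defs.
From HB Require Import structures.
From mathcomp Require Import all_boot all_order all_algebra.
From mathcomp Require Import ring zify.
Set Implicit Arguments. Unset Strict Implicit. Unset Printing Implicit Defensive.
Import GRing.Theory.
Local Open Scope ring_scope.


Section Helpers.
Variable F : fieldType.

Lemma poly_eq0_roots (p : {poly F}) (rs : seq F) :
  all (root p) rs -> uniq rs -> (size p <= size rs)%N -> p = 0.
Proof.
move=> hr hu hs; apply/eqP; apply: contraTT hs => hp.
by rewrite -ltnNge; apply: max_poly_roots.
Qed.

Definition grs (N : nat) (beta w : 'I_N -> F) (h : {poly F}) : 'rV[F]_N :=
  \row_(i < N) (w i * h.[beta i]).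

Lemma grs_inj N (beta w : 'I_N -> F) : injective beta -> (forall i, w i != 0) ->
  forall h1 h2 : {poly F}, (size h1 <= N)%N -> (size h2 <= N)%N ->
  grs beta w h1 = grs beta w h2 -> h1 = h2.
Proof.
move=> hb hw h1 h2 s1 s2 E; apply/eqP; rewrite -subr_eq0; apply/eqP.
apply: (@poly_eq0_roots _ (map beta (enum 'I_N))).
- apply/allP => x /mapP [i _ ->]; rewrite /root hornerD hornerN.
  have := congr1 (fun m : 'rV[F]_N => m 0 i) E; rewrite !mxE => /(mulfI (hw i)) ->.
  by rewrite subrr.
- by rewrite map_inj_uniq ?enum_uniq.
- rewrite size_map size_enum_ord; apply: leq_trans (size_add _ _) _.
  by rewrite size_opp geq_max s1 s2.
Qed.

Lemma factor_roots (h : {poly F}) (rs : seq F) :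
  uniq rs -> all (root h) rs -> (size h <= size rs + 3)%N ->
  exists q : {poly F}, (size q <= 3)%N /\ h = q * \prod_(z <- rs) ('X - z%:P).
Proof.
move=> hu hr hs.
have hu' : uniq_roots rs by rewrite uniq_rootsE.
have [q Eq] := uniq_roots_prod_XsubC hr hu'.
exists q; split=> //.
have [->|qn0] := eqVneq q 0; first by rewrite size_poly0.
have Pn0 : \prod_(z <- rs) ('X - z%:P) != 0 by apply: monic_neq0; apply: monic_prod_XsubC.
move: hs; rewrite Eq size_mul // size_prod_XsubC addnS /=.
by rewrite addnC leq_add2l.
Qed.

Lemma dep6 (p : 'I_6 -> {poly F}) : (forall i, size (p i) <= 5)%N ->
  exists u : 'I_6 -> F, (exists i, u i != 0) /\ \sum_i u i *: p i = 0.
Proof.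
move=> hs.
pose A : 'M[F]_(6,5) := \matrix_(i, j) (p i)`_j.
have hk : kermx A != 0.
  apply/eqP => h0.
  have := mxrank_ker A; rewrite h0 mxrank0 => E.
  have := rank_leq_col A. move: E; case: (\rank A) => [|[|[|[|[|[|r]]]]]] //.
have : [exists i, exists j, kermx A i j != 0].
  apply: contraNT hk => /existsPn H; apply/eqP/matrixP => i j.
  have /existsPn := H i; move=> /(_ j); rewrite negbK => /eqP ->; by rewrite mxE.
case/existsP => i /existsP [j hij].
exists (fun t => kermx A i t); split; first by exists j.
apply/polyP => d; rewrite coef0 coef_sum.
case: (ltnP d 5) => hd.
- have := congr1 (fun m : 'M[F]_(6,5) => m i (Ordinal hd)) (mulmx_ker A).
  rewrite [in RHS]mxE [in LHS]mxE => E; rewrite -[in RHS]E.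
  apply: eq_bigr => t _; rewrite coefZ; congr (_ * _); by rewrite /A mxE.
- by apply: big1 => t _; rewrite coefZ nth_default ?mulr0 // (leq_trans (hs t)).
Qed.

End Helpers.

Section Mono.
Variable F : fieldType.
Variable N : nat.
Variable M : 'M[F]_N.
Hypothesis Mrow : forall i : 'I_N, #|[set j : 'I_N | M i j != 0]| = 1%N.
Hypothesis Mcol : forall j : 'I_N, #|[set i : 'I_N | M i j != 0]| = 1%N.

Lemma colU i i' j : M i j != 0 -> M i' j != 0 -> i = i'.
Proof.
move=> h h'.
have /cards1P [x Hx] : #|[set i | M i j != 0]| == 1%N by rewrite Mcol.
have : i \in [set i | M i j != 0] by rewrite inE.
have : i' \in [set i | M i j != 0] by rewrite inE.
by rewrite Hx !inE => /eqP -> /eqP ->.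
Qed.

Lemma mulmx_mono (x : 'rV[F]_N) i j : M i j != 0 -> (x *m M) 0 j = x 0 i * M i j.
Proof.
move=> h; rewrite !mxE (bigD1 i) //= big1 ?addr0 // => l hl.
case: (eqVneq (M l j) 0) => [->|hne]; first by rewrite mulr0.
by rewrite (colU hne h) eqxx in hl.
Qed.

Lemma row_ex i : exists j, M i j != 0.
Proof.
have : (0 < #|[set j : 'I_N | M i j != 0%R]|)%N by rewrite Mrow.
by case/card_gt0P => j; rewrite inE => hj; exists j.
Qed.

Definition rho (i : 'I_N) : 'I_N := if [pick j | M i j != 0] is Some j then j else i.

Lemma rhoP i : M i (rho i) != 0.
Proof.
rewrite /rho; case: pickP => [//|H]; have [j hj] := row_ex i.
by have := H j; rewrite hj.
Qed.

Lemma rho_inj : injective rho.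
Proof. move=> i i' E; apply: (colU (rhoP i)); rewrite E; exact: rhoP. Qed.

End Mono.

Lemma counting (F : finFieldType) (k N : nat) (T S : {poly F} -> 'rV[F]_N) :
  (forall h1 h2 : {poly F}, (size h1 <= k.+1)%N -> (size h2 <= k.+1)%N -> S h1 = S h2 -> h1 = h2) ->
  (forall h : {poly F}, (size h <= k.+1)%N -> exists g : {poly F}, (size g <= k)%N /\ T g = S h) -> False.
Proof.
move=> Hinj HS.
pose phi (v : 'rV[F]_k.+1) : 'rV[F]_k :=
  if [pick u : 'rV[F]_k | T (rVpoly u) == S (rVpoly v)] is Some u then u else 0.
have szr d (u : 'rV[F]_d) : (size (rVpoly u) <= d)%N by rewrite /rVpoly; apply: size_poly.
have phiP v : T (rVpoly (phi v)) = S (rVpoly v).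
  rewrite /phi; case: pickP => [u /eqP //| H]; exfalso.
  have [g [sg Eg]] := HS (rVpoly v) (szr _ _).
  by have := H (poly_rV g); rewrite poly_rV_K // Eg eqxx.
have inj : injective phi.
  move=> v1 v2 E; apply: (can_inj rVpolyK); apply: Hinj; try exact: szr.
  by rewrite -!phiP E.
have := @leq_card _ _ phi inj; rewrite !card_mx !mul1n expnS.
have h1 := card_finNzRing_gt1 F.
have h2 : (0 < #|F| ^ k)%N by rewrite expn_gt0 (ltn_trans _ h1).
by rewrite leqNgt ltn_Pmull.
Qed.

Lemma dep6' (F : fieldType) (p0 p1 p2 p3 p4 p5 : {poly F}) :
  (size p0 <= 5)%N -> (size p1 <= 5)%N -> (size p2 <= 5)%N ->
  (size p3 <= 5)%N -> (size p4 <= 5)%N -> (size p5 <= 5)%N ->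
  exists c0 c1 c2 c3 c4 c5 : F,
    ~ (c0 = 0 /\ c1 = 0 /\ c2 = 0 /\ c3 = 0 /\ c4 = 0 /\ c5 = 0) /\
    c0 *: p0 + c1 *: p1 + c2 *: p2 + c3 *: p3 + c4 *: p4 + c5 *: p5 = 0.
Proof.
move=> s0 s1 s2 s3 s4 s5.
have [|u [[t ht] E]] := @dep6 F (fun t : 'I_6 => nth 0 [:: p0; p1; p2; p3; p4; p5] t).
  by case=> [[|[|[|[|[|[|t]]]]]] ht].
have E6 : forall t : 'I_6, t = inord t by move=> t'; rewrite inord_val.
exists (u (inord 0)), (u (inord 1)), (u (inord 2)), (u (inord 3)), (u (inord 4)), (u (inord 5)).
split.
  move=> [h0 [h1 [h2 [h3 [h4 h5]]]]]; move: ht; rewrite (E6 t).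
  by case: t => [[|[|[|[|[|[|t]]]]]] ?] //=; rewrite ?h0 ?h1 ?h2 ?h3 ?h4 ?h5 eqxx.
move: E; rewrite (eq_bigr (fun t : 'I_6 => u (inord t) *: nth 0 [:: p0; p1; p2; p3; p4; p5] t)); last first.
  by move=> t' _; rewrite -E6.
rewrite !big_ord_recl big_ord0 /= addr0 !addrA => <-.
done.
Qed.

Lemma key (F : fieldType) (N k : nat) (M : 'M[F]_N) (beta w : 'I_N -> F)
    (rh : 'I_N -> 'I_N) (x0 x1 x2 : 'rV[F]_N) (Z : seq 'I_N) :
  injective beta -> (forall j, w j != 0) -> injective rh ->
  (forall i, M i (rh i) != 0) ->
  (forall i (x : 'rV[F]_N), (x *m M) 0 (rh i) = x 0 i * M i (rh i)) ->
  (exists h : {poly F}, (size h <= k)%N /\ x0 *m M = grs beta w h) ->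
  (exists h : {poly F}, (size h <= k)%N /\ x1 *m M = grs beta w h) ->
  (exists h : {poly F}, (size h <= k)%N /\ x2 *m M = grs beta w h) ->
  uniq Z -> size Z = (k - 3)%N -> (3 <= k)%N ->
  (forall z, z \in Z -> [/\ x0 0 z = 0, x1 0 z = 0 & x2 0 z = 0]) ->
  exists l00 l01 l02 l11 l12 l22 : F,
    ~ (l00 = 0 /\ l01 = 0 /\ l02 = 0 /\ l11 = 0 /\ l12 = 0 /\ l22 = 0) /\
    forall i, l00 * (x0 0 i * x0 0 i) + l01 * (x0 0 i * x1 0 i) + l02 * (x0 0 i * x2 0 i)
            + l11 * (x1 0 i * x1 0 i) + l12 * (x1 0 i * x2 0 i) + l22 * (x2 0 i * x2 0 i) = 0.
Proof.
move=> hb hw hr hM hmul [h0 [s0 E0]] [h1 [s1 E1]] [h2 [s2 E2]] hu hsz hk3 hZ.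
set rs := [seq beta (rh z) | z <- Z].
have urs : uniq rs by rewrite map_inj_uniq ?hu // => a b /hb /hr.
set P := \prod_(z <- rs) ('X - z%:P).
have fact : forall (x : 'rV_N) (h : {poly F}), (size h <= k)%N -> x *m M = grs beta w h ->
    (forall z, z \in Z -> x 0 z = 0) -> exists q : {poly F}, (size q <= 3)%N /\ h = q * P.
  move=> x h sh E hz; apply: factor_roots => //.
  - apply/allP => y /mapP [z zZ ->]; have := hmul z x.
    rewrite E hz // mul0r mxE => /eqP; by rewrite mulf_eq0 (negbTE (hw _)).
  - by rewrite size_map hsz subnK.
have [q0 [t0 Eq0]] := fact x0 h0 s0 E0 (fun z zZ => let: And3 a _ _ := hZ z zZ in a).
have [q1 [t1 Eq1]] := fact x1 h1 s1 E1 (fun z zZ => let: And3 _ a _ := hZ z zZ in a).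
have [q2 [t2 Eq2]] := fact x2 h2 s2 E2 (fun z zZ => let: And3 _ _ a := hZ z zZ in a).
subst h0 h1 h2.
have sm : forall a b : {poly F}, (size a <= 3)%N -> (size b <= 3)%N -> (size (a * b)%R <= 5)%N.
  move=> a b sa sb; apply: leq_trans (size_mul_leq _ _) _.
  lia.
have [c0 [c1 [c2 [c3 [c4 [c5 [nz Ec]]]]]]] :=
  dep6' (sm _ _ t0 t0) (sm _ _ t0 t1) (sm _ _ t0 t2) (sm _ _ t1 t1) (sm _ _ t1 t2) (sm _ _ t2 t2).
exists c0, c1, c2, c3, c4, c5; split => // i.
have hMi := hM i.
have ev : forall (x : 'rV_N) q, x *m M = grs beta w (q * P) ->
    x 0 i * M i (rh i) = (w (rh i) * P.[beta (rh i)]) * q.[beta (rh i)].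
  by move=> x q E; rewrite -hmul E mxE hornerM; ring.
have e0 := ev _ _ E0; have e1 := ev _ _ E1; have e2 := ev _ _ E2.
set m := M i (rh i) in hMi e0 e1 e2 *.
set b := beta (rh i) in e0 e1 e2 *.
set s := w (rh i) * P.[b] in e0 e1 e2.
set S := (X in X = 0).
have : S * m ^+ 2 = 0.
  transitivity (c0 * ((x0 0 i * m) * (x0 0 i * m)) + c1 * ((x0 0 i * m) * (x1 0 i * m))
     + c2 * ((x0 0 i * m) * (x2 0 i * m)) + c3 * ((x1 0 i * m) * (x1 0 i * m))
     + c4 * ((x1 0 i * m) * (x2 0 i * m)) + c5 * ((x2 0 i * m) * (x2 0 i * m))).
    by rewrite /S; ring.
  rewrite e0 e1 e2.
  transitivity (s ^+ 2 * (c0 *: (q0 * q0) + c1 *: (q0 * q1) + c2 *: (q0 * q2)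
     + c3 *: (q1 * q1) + c4 *: (q1 * q2) + c5 *: (q2 * q2)).[b]).
    rewrite !hornerD !hornerZ !hornerM; ring.
  by rewrite Ec horner0 mulr0.
move/eqP; rewrite mulf_eq0 expf_eq0 (negbTE hMi) andbF orbF; by move/eqP.
Qed.

Definition tww (F : fieldType) (n k : nat) (alpha v : 'I_n -> F)
    (eta delta : F) (g : {poly F}) : 'rV[F]_(n + 3) :=
    let f := g + (eta * g`_(k.-1)) *: 'X^(k + 2) in
    \row_(j < n + 3)
          match split j with
          | inl i => v i * f.[alpha i]
          | inr t => if val t == 0%N then g`_(k.-1)
                     else if val t == 1%N then g`_(k - 2)
                     else g`_(k - 3) + delta * g`_(k.-1)
          end.

Lemma twE (F : fieldType) (n k : nat) (alpha v : 'I_n -> F) (eta delta : F) x :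
  twisted_code k alpha v eta delta x <->
  exists g : {poly F}, (size g <= k)%N /\ x = tww k alpha v eta delta g.
Proof. by []. Qed.

Section Tw.
Variables (F : fieldType) (n k : nat) (alpha v : 'I_n -> F) (eta delta : F).
Local Notation tw := (tww k alpha v eta delta).

Lemma tw_l (g : {poly F}) (j : 'I_n) : tw g 0 (lshift 3 j) =
  v j * (g + (eta * g`_(k.-1)) *: 'X^(k + 2)).[alpha j].
Proof. by rewrite mxE (unsplitK (inl _ j)). Qed.

Lemma tw_l0 (g : {poly F}) (j : 'I_n) : (size g <= k.-1)%N -> tw g 0 (lshift 3 j) = v j * g.[alpha j].
Proof. by move=> sg; rewrite tw_l (nth_default _ sg) mulr0 scale0r addr0. Qed.

Lemma tw_r (g : {poly F}) (t : 'I_3) : tw g 0 (rshift n t) =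
  if val t == 0%N then g`_(k.-1)
  else if val t == 1%N then g`_(k - 2)
  else g`_(k - 3) + delta * g`_(k.-1).
Proof. by rewrite mxE (unsplitK (inr _ t)). Qed.
End Tw.

Lemma reduce (F : finFieldType) (n k : nat) (alpha v : 'I_n -> F) (eta delta : F) :
  (3 <= k)%N -> (k + 4 <= n)%N ->
  (exists C' : code F (n + 3), is_GRS C' /\
       monomially_equivalent (twisted_code k alpha v eta delta) C') ->
  exists (M : 'M[F]_(n + 3)) (beta w : 'I_(n+3) -> F) (rh : 'I_(n+3) -> 'I_(n+3)),
   injective beta /\ (forall j, w j != 0) /\ injective rh /\
       (forall i, M i (rh i) != 0) /\
       (forall i (x : 'rV[F]_(n+3)), (x *m M) 0 (rh i) = x 0 i * M i (rh i)) /\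
       (forall g : {poly F}, (size g <= k)%N -> exists h : {poly F}, (size h <= k)%N /\
           tww k alpha v eta delta g *m M = grs beta w h).
Proof.
move=> k3 kn [C' [[k' [beta [w [binj [wnz HC']]]]] [r [G [M [[_ HG] [[Mrow Mcol] [_ HGM]]]]]]]].
have D1 : forall g : {poly F}, (size g <= k)%N -> exists h : {poly F}, (size h <= k')%N /\
    tww k alpha v eta delta g *m M = grs beta w h.
  move=> g sg.
  have : twisted_code k alpha v eta delta (tww k alpha v eta delta g) by apply/twE; exists g.
  move/HG => [u Eu].
  have : C' (tww k alpha v eta delta g *m M) by apply/HGM; exists u; rewrite Eu mulmxA.
  by move/HC' => [h [sh Eh]]; exists h.
have D2 : forall h : {poly F}, (size h <= k')%N -> exists g : {poly F}, (size g <= k)%N /\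
    tww k alpha v eta delta g *m M = grs beta w h.
  move=> h sh.
  have : C' (grs beta w h) by apply/HC'; exists h.
  move/HGM => [u Eu].
  have : twisted_code k alpha v eta delta (u *m G) by apply/HG; exists u.
  move/twE => [g [sg Eg]]; exists g; split => //.
  by rewrite -Eg Eu mulmxA.
have kk : (k' <= k)%N.
  rewrite leqNgt; apply/negP => lt.
  apply: (@counting F k (n + 3) (fun g => tww k alpha v eta delta g *m M) (grs beta w)).
  - move=> h1 h2 s1 s2; apply: grs_inj => //.
    + by apply: leq_trans s1 _; lia.
    + by apply: leq_trans s2 _; lia.
  - by move=> h sh; apply: D2; apply: leq_trans sh lt.
exists M, beta, w, (rho M); do !split => //.
- exact: rho_inj Mrow Mcol.
- exact: rhoP Mrow.
- by move=> i x; apply: (mulmx_mono Mcol x (rhoP Mrow i)).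
- move=> g sg; have [h [sh Eh]] := D1 g sg; exists h; split => //.
  exact: leq_trans sh kk.
Qed.

Lemma caseB (F : fieldType) (n : nat) (alpha v : 'I_n -> F) (eta delta : F)
   (M : 'M[F]_(n + 3)) (beta w : 'I_(n+3) -> F) (rh : 'I_(n+3) -> 'I_(n+3)) :
  injective alpha -> (forall i, v i != 0) -> eta != 0 -> (7 <= n)%N ->
  injective beta -> (forall j, w j != 0) -> injective rh -> (forall i, M i (rh i) != 0) ->
  (forall i (x : 'rV[F]_(n+3)), (x *m M) 0 (rh i) = x 0 i * M i (rh i)) ->
  (forall g : {poly F}, (size g <= 3)%N -> exists h : {poly F}, (size h <= 3)%N /\
           tww 3 alpha v eta delta g *m M = grs beta w h) -> False.
Proof.
move=> ainj vnz etanz n7 hb hw hr hM hmul D.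
set tw := tww 3 alpha v eta delta.
have s1 : (size (1%R : {poly F}) <= 3)%N by rewrite size_poly1.
have sX : (size ('X : {poly F}) <= 3)%N by rewrite size_polyX.
have sX2 : (size ('X^2%R : {poly F}) <= 3)%N by rewrite size_polyXn.
have [l00 [l01 [l02 [l11 [l12 [l22 [nz R]]]]]]] :=
  @key F (n + 3) 3 M beta w rh (tw 1) (tw 'X) (tw 'X^2) [::] hb hw hr hM hmul
     (D _ s1) (D _ sX) (D _ sX2) isT erefl isT (fun z zZ => ltac:(by rewrite in_nil in zZ)).
have h22 : l22 = 0.
  have := R (rshift n ord0); rewrite /tw !tw_r /= !coef1 !coefX !coefXn /=.
  by rewrite ?mulr0n ?mulr1n ?mul0r ?mulr0 ?add0r ?addr0 ?mulr1 ?mul1r.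
have h11 : l11 = 0.
  have := R (rshift n (Ordinal (isT : (1 < 3)%N))); rewrite /tw !tw_r /= !coef1 !coefX !coefXn /=.
  by rewrite ?mulr0n ?mulr1n ?mul0r ?mulr0 ?add0r ?addr0 ?mulr1 ?mul1r.
have e0 j : tw 1 0 (lshift 3 j) = v j.
  by rewrite /tw tw_l coef1 /= mulr0n mulr0 scale0r addr0 hornerC mulr1.
have e1 j : tw 'X 0 (lshift 3 j) = v j * alpha j.
  by rewrite /tw tw_l coefX /= mulr0n mulr0 scale0r addr0 hornerX.
have e2 j : tw 'X^2 0 (lshift 3 j) = v j * (alpha j ^+ 2 + eta * alpha j ^+ 5).
  by rewrite /tw tw_l coefXn /= mulr1n mulr1 hornerD hornerZ !hornerXn.
pose Q : {poly F} := \poly_(i < 7) [:: l00; l01; l02; l12; 0; l02 * eta; l12 * eta]`_i.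
have HQ : Q = 0.
  apply: (@poly_eq0_roots _ _ (map alpha (enum 'I_n))).
  - apply/allP => x /mapP [j _ ->].
    have := R (lshift 3 j); rewrite e0 e1 e2 h11 h22 => Rj.
    have : v j ^+ 2 * Q.[alpha j] = 0.
      rewrite -[RHS]Rj /Q horner_poly !big_ord_recl big_ord0 /=; ring.
    by move/eqP; rewrite mulf_eq0 expf_eq0 (negbTE (vnz j)) andbF /=.
  - by rewrite map_inj_uniq ?enum_uniq.
  - rewrite size_map size_enum_ord; apply: leq_trans n7; exact: size_poly.
have c k0 : Q`_k0 = 0 by rewrite HQ coef0.
have := c 0%N; have := c 1%N; have := c 5%N; have := c 6%N.
rewrite /Q !coef_poly /= => /eqP; rewrite mulf_eq0 (negbTE etanz) orbF => /eqP h12.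
move=> /eqP; rewrite mulf_eq0 (negbTE etanz) orbF => /eqP h02 h01 h00.
by apply: nz; do !split.
Qed.

Lemma caseA (F : fieldType) (n k : nat) (alpha v : 'I_n -> F) (eta delta : F)
   (M : 'M[F]_(n + 3)) (beta w : 'I_(n+3) -> F) (rh : 'I_(n+3) -> 'I_(n+3)) :
  injective alpha -> (forall i, v i != 0) -> (4 <= k)%N -> (k + 4 <= n)%N ->
  injective beta -> (forall j, w j != 0) -> injective rh -> (forall i, M i (rh i) != 0) ->
  (forall i (x : 'rV[F]_(n+3)), (x *m M) 0 (rh i) = x 0 i * M i (rh i)) ->
  (forall g : {poly F}, (size g <= k)%N -> exists h : {poly F}, (size h <= k)%N /\
           tww k alpha v eta delta g *m M = grs beta w h) -> False.
Proof.
move=> ainj vnz k4 kn hb hw hr hM hmul D.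
set tw := tww k alpha v eta delta.
have hle : (k - 4 <= n)%N by lia.
pose Tn : seq 'I_n := [seq widen_ord hle j | j <- enum 'I_(k-4)].
have uTn : uniq Tn.
  by rewrite map_inj_uniq ?enum_uniq // => a b /(congr1 val) /= /val_inj.
have sTn : size Tn = (k - 4)%N by rewrite size_map size_enum_ord.
pose P : {poly F} := \prod_(z <- map alpha Tn) ('X - z%:P).
have sP : size P = (k - 3)%N by rewrite size_prod_XsubC size_map sTn; lia.
have Pn0 : P != 0 by rewrite -size_poly_eq0 sP; lia.
have lP : P`_(k - 4) = 1.
  have mP : P \is monic by apply: monic_prod_XsubC.
  have := monicP mP; rewrite lead_coefE sP.
  by have -> : (k - 3).-1 = (k - 4)%N by lia.
have rP j : (P.[alpha j] == 0) = (j \in Tn).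
  by have := root_prod_XsubC (map alpha Tn) (alpha j); rewrite mem_map // => <-.
pose g1 := P * 'X; pose g2 := P * 'X * 'X.
have sg1 : size g1 = (k - 2)%N by rewrite size_mulX // sP; lia.
have sg2 : size g2 = (k - 1)%N.
  by rewrite size_mulX ?size_mulX ?sP; [lia | | ]; rewrite // mulf_neq0 ?polyX_eq0.
have sk0 : (size P <= k.-1)%N by rewrite sP; lia.
have sk1 : (size g1 <= k.-1)%N by rewrite sg1; lia.
have sk2 : (size g2 <= k.-1)%N by rewrite sg2; lia.
have sk (g : {poly F}) : (size g <= k.-1)%N -> (size g <= k)%N.
  by move=> h; apply: leq_trans h _; apply: leq_pred.
have e0 j : tw P 0 (lshift 3 j) = v j * P.[alpha j] by rewrite /tw tw_l0.
have e1 j : tw g1 0 (lshift 3 j) = v j * (P.[alpha j] * alpha j).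
  by rewrite /tw tw_l0 // /g1 hornerMX.
have e2 j : tw g2 0 (lshift 3 j) = v j * (P.[alpha j] * alpha j * alpha j).
  by rewrite /tw tw_l0 // /g2 !hornerMX.
have r0 (g : {poly F}) : (size g <= k.-1)%N -> tw g 0 (rshift n ord0) = 0.
  by move=> h; rewrite /tw tw_r /= (nth_default _ h).
pose Z := map (lshift 3) Tn ++ [:: rshift n ord0].
have uZ : uniq Z.
  rewrite cat_uniq map_inj_uniq ?uTn //=; last exact: lshift_inj.
  rewrite andbT orbF; apply/mapP => [[j _]] /eqP; by rewrite eq_rlshift.
have sZ : size Z = (k - 3)%N by rewrite size_cat size_map sTn /=; lia.
have vZ : forall z, z \in Z -> [/\ tw P 0 z = 0, tw g1 0 z = 0 & tw g2 0 z = 0].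
  move=> z; rewrite mem_cat => /orP [/mapP [j jT ->]|].
    have hz : P.[alpha j] = 0 by apply/eqP; rewrite rP.
    by rewrite e0 e1 e2 hz !mul0r mulr0.
  by rewrite inE => /eqP ->; rewrite !r0.
have [l00 [l01 [l02 [l11 [l12 [l22 [nz R]]]]]]] :=
  @key F (n + 3) k M beta w rh (tw P) (tw g1) (tw g2) Z hb hw hr hM hmul
     (D _ (sk _ sk0)) (D _ (sk _ sk1)) (D _ (sk _ sk2)) uZ sZ (ltnW k4) vZ.
pose t2 : 'I_3 := Ordinal (isT : (2 < 3)%N).
have hrel : l11 + l12 * g2`_(k - 3) + l22 * (g2`_(k - 3) * g2`_(k - 3)) = 0.
  have := R (rshift n t2); rewrite /tw !tw_r /=.
  rewrite !(nth_default _ sk0) !(nth_default _ sk1) !(nth_default _ sk2) !mulr0 !addr0.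
  rewrite (nth_default _ (_ : (size P <= k - 3)%N)); last by rewrite sP.
  rewrite /g1 coefMX.
  have -> : (k - 3 == 0)%N = false by apply/eqP; lia.
  have -> : (k - 3).-1 = (k - 4)%N by lia.
  rewrite lP !mul0r !mulr0 !add0r !mulr1 !mul1r.
  done.
pose Q : {poly F} := \poly_(i < 5) [:: l00; l01; l02 + l11; l12; l22]`_i.
have HQ : Q = 0.
  apply: (@poly_eq0_roots _ _ (map alpha (enum [predC Tn]))).
  - apply/allP => x /mapP [j]; rewrite mem_enum inE => jT ->.
    have := R (lshift 3 j); rewrite e0 e1 e2 => Rj.
    have : (v j * P.[alpha j]) ^+ 2 * Q.[alpha j] = 0.
      rewrite -[RHS]Rj /Q horner_poly !big_ord_recl big_ord0 /=; ring.
    move/eqP; rewrite mulf_eq0 expf_eq0 mulf_eq0 (negbTE (vnz j)) rP (negbTE jT) /=.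
    by [].
  - by rewrite map_inj_uniq ?enum_uniq.
  - rewrite size_map -cardE; apply: leq_trans (size_poly _ _) _.
    have hc : (#|Tn| + #|[predC Tn]| = n)%N by rewrite -[RHS](card_ord n); apply: cardC.
    have := card_size Tn; rewrite sTn => hs.
    move: hc; set a := #|[predC Tn]|; move=> hc; move: hs; set b := #|Tn|; move=> hs; move: hc hs kn k4; clear; lia.
have c k0 : Q`_k0 = 0 by rewrite HQ coef0.
have := c 0%N; have := c 1%N; have := c 2%N; have := c 3%N; have := c 4%N.
rewrite /Q !coef_poly /= => h22 h12 h0211 h01 h00.
move: hrel; rewrite h22 h12 !mul0r !addr0 => h11.
move: h0211; rewrite h11 addr0 => h02.
by apply: nz; do !split.
Qed.

Unset Implicit Arguments.

Theorem theorem7 (F : finFieldType) (n k : nat) (alpha v : 'I_n -> F) (eta delta : F) :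
  (3 <= k)%N -> (k <= n)%N -> (n <= #|F|)%N ->
  injective alpha -> (forall i, v i != 0) -> eta != 0 ->
  (k + 4 <= n)%N ->
  ~ (exists C' : code F (n + 3), is_GRS C' /\
       monomially_equivalent (twisted_code k alpha v eta delta) C').
Proof.
move=> k3 kn nF ainj vnz etanz kn4 H.
have [M [beta [w [rh [hb [hw [hr [hM [hmul D]]]]]]]]] := reduce k3 kn4 H.
case: (eqVneq k 3) => [Ek|Nk].
  subst k; apply: (caseB ainj vnz etanz _ hb hw hr hM hmul D); lia.
apply: (caseA ainj vnz _ kn4 hb hw hr hM hmul D); lia.
Qed.
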